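(* Let $L\in(0,\infty)$ and for $k\in\mathbb{N}$ put $n_k:=\lfloor (k/L)^2\rfloor$. Then for every $x\in F(1/2,1)$ there is $k_0=k_0(x)$ such that for every $k\ge k_0$ there exists an integer $j_k$ with $n_{k-1}<j_k\le n_k$ and $T_{n_k}(x)=a_{j_k}(x)$.
   Context: Every $x\in(0,1)\setminus\mathbb{Q}$ has a unique infinite continued fraction expansion $x=[a_1(x),a_2(x),\dots]$ with partial quotients $a_i(x)\in\mathbb{N}=\{1,2,\dots\}$. For $n\in\mathbb{N}$ let $T_n(x):=\max\{a_k(x):1\le k\le n\}$. Define $$F(1/2,1):=\Big\{x\in(0,1)\setminus\mathbb{Q}:\ \lim_{n\to\infty}\frac{T_n(x)}{e^{\sqrt{n}}}=1\Big\}.$$ *)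

(* Defs.v *)
From Stdlib Require Import Reals Lra Lia ZArith Arith.
Open Scope R_scope.

(* floor of a real, as an integer: Int_part r = up r - 1 = floor r *)
Definition floorZ (r : R) : Z := Int_part r.

Definition gauss (x : R) : R := / x - IZR (floorZ (/ x)).

(* Continued fraction partial quotients, 1-indexed:
   a_1(x) = floor(1/x), a_{n+1}(x) = a_1(G^n x).  (cf_digit 0 x is a dummy.) *)
Definition cf_digit (n : nat) (x : R) : nat :=
  match n with
  | O => O
  | S m => Z.to_nat (floorZ (/ (Nat.iter m gauss x)))
  end.

Fixpoint Tmax (n : nat) (x : R) : nat :=
  match n with
  | O => O
  | S m => Nat.max (Tmax m x) (cf_digit (S m) x)
  end.

Definition irrational (x : R) : Prop :=
  forall p q : Z, q <> 0%Z -> x <> IZR p / IZR q.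

Definition F_half_one (x : R) : Prop :=
  0 < x < 1 /\ irrational x /\
  Un_cv (fun n => INR (Tmax n x) / exp (sqrt (INR n))) 1.

Definition nk (L : R) (k : nat) : nat := Z.to_nat (floorZ ((INR k / L) ^ 2)).

(* Main.v *)
Require Import Defs.
From Stdlib Require Import Reals ZArith Arith Lra Lia.
Open Scope R_scope.

Lemma nk_bounds L k : (INR k / L)^2 - 1 < INR (nk L k) <= (INR k / L)^2.
Proof.
  unfold nk, floorZ.
  set (rr := ((INR k / L) ^ 2)).
  destruct (base_Int_part rr) as [H1 H2].
  assert (Hr : 0 <= rr) by (unfold rr; apply pow2_ge_0).
  assert (Hz : (0 <= Int_part rr)%Z).
  { assert (IZR (-1) < IZR (Int_part rr)) by (simpl; lra).
    apply lt_IZR in H. lia. }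
  rewrite INR_IZR_INZ, Z2Nat.id by exact Hz. lra.
Qed.

Lemma Tmax_mono x p m : (p <= m)%nat -> (Tmax p x <= Tmax m x)%nat.
Proof.
  induction m; intros H.
  - assert (p = 0%nat) by lia. subst. lia.
  - destruct (Nat.eq_dec p (S m)). subst; lia.
    simpl. specialize (IHm ltac:(lia)). lia.
Qed.

Lemma Tmax_attain x p m : (p <= m)%nat ->
  Tmax m x = Tmax p x \/ exists j, (p < j <= m)%nat /\ Tmax m x = cf_digit j x.
Proof.
  induction m; intros H.
  - assert (p = 0%nat) by lia. subst. left; reflexivity.
  - destruct (Nat.eq_dec p (S m)). subst; left; reflexivity.
    specialize (IHm ltac:(lia)). change (Tmax (S m) x) with (Nat.max (Tmax m x) (cf_digit (S m) x)).
    destruct (le_lt_dec (Tmax m x) (cf_digit (S m) x)).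
    + right. exists (S m). split. lia. lia.
    + rewrite Nat.max_l by lia.
      destruct IHm as [E|[j [Hj E]]]. left; exact E.
      right. exists j. split. lia. exact E.
Qed.

Theorem lemma1 (L : R) (hL : 0 < L) (x : R) (hx : F_half_one x) :
  exists k0 : nat, (1 <= k0)%nat /\
    forall k : nat, (k0 <= k)%nat ->
      exists j : nat, (nk L (k - 1) < j <= nk L k)%nat /\
        Tmax (nk L k) x = cf_digit j x.
Proof.
  destruct hx as [_ [_ Hcv]].
  set (a := exp (1 / (2 * L))).
  assert (Ha : 1 < a).
  { unfold a. pose proof (exp_increasing 0 (1 / (2 * L))) as He.
    rewrite exp_0 in He. apply He. apply Rdiv_lt_0_compat; lra. }
  set (eps := (a - 1) / (2 * (a + 1))).
  assert (Heps : 0 < eps) by (unfold eps; apply Rdiv_lt_0_compat; lra).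
  assert (Heps1 : eps < 1 / 2).
  { unfold eps. apply Rmult_lt_reg_r with (2 * (a + 1)). lra.
    unfold Rdiv. rewrite Rmult_assoc, Rinv_l by lra. lra. }
  assert (Hkey : (1 - eps) * a > 1 + eps).
  { assert (eps * (2 * (a + 1)) = a - 1).
    { unfold eps. field. lra. }
    nra. }
  destruct (Hcv eps Heps) as [N HN].
  destruct (archimed (L * (INR N + 1) + 2 * L ^ 2 + L + 1)) as [Hup _].
  set (K := Z.to_nat (up (L * (INR N + 1) + 2 * L ^ 2 + L + 1))).
  assert (HK : L * (INR N + 1) + 2 * L ^ 2 + L + 1 < INR K).
  { unfold K. assert (0 <= L * (INR N + 1) + 2 * L ^ 2 + L + 1).
    { pose proof (pos_INR N). assert (0 <= L * (INR N + 1)) by nra. nra. }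
    assert (Hz : (0 <= up (L * (INR N + 1) + 2 * L ^ 2 + L + 1))%Z).
    { apply le_IZR. lra. }
    rewrite (INR_IZR_INZ (Z.to_nat _)), Z2Nat.id by exact Hz. exact Hup. }
  exists (S K). split. lia.
  intros k Hk.
  set (p := nk L (k - 1)). set (m := nk L k).
  assert (Hk1 : INR (k - 1) = INR k - 1).
  { rewrite minus_INR by lia. simpl. lra. }
  assert (HKk : INR K <= INR k - 1).
  { rewrite <- Hk1. apply le_INR. lia. }
  set (A := INR k / L). set (B := INR (k - 1) / L).
  assert (HAB : A - B = 1 / L).
  { unfold A, B. rewrite Hk1. field. lra. }
  assert (HAL : A * L = INR k) by (unfold A; field; lra).
  assert (HBL : B * L = INR k - 1) by (unfold B; rewrite Hk1; field; lra).
  pose proof (pos_INR N) as HN0.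
  assert (HLN : 0 <= L * (INR N + 1)) by nra.
  assert (HB0 : INR N + 1 <= B).
  { apply Rmult_le_reg_r with L. lra. nra. }
  assert (HA2L : 2 * L <= A).
  { apply Rmult_le_reg_r with L. lra. nra. }
  assert (HA1 : 1 <= A).
  { apply Rmult_le_reg_r with L. lra. nra. }
  destruct (nk_bounds L k) as [Hm1 Hm2]. fold A m in Hm1, Hm2.
  destruct (nk_bounds L (k - 1)) as [Hp1 Hp2]. fold B p in Hp1, Hp2.
  assert (HsA : A - 1 / A <= sqrt (INR m)).
  { assert (H0 : 0 <= A - 1 / A).
    { assert (1 / A <= 1). { unfold Rdiv. rewrite Rmult_1_l.
        rewrite <- Rinv_1. apply Rinv_le_contravar; lra. } lra. }
    rewrite <- (sqrt_pow2 (A - 1 / A)) by exact H0.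
    apply sqrt_le_1_alt.
    assert ((A - 1 / A) ^ 2 = A ^ 2 - 2 + (1 / A) ^ 2) by (field; lra).
    assert ((1 / A) ^ 2 <= 1).
    { assert (0 <= 1 / A <= 1). split. apply Rlt_le, Rdiv_lt_0_compat; lra.
      unfold Rdiv. rewrite Rmult_1_l. rewrite <- Rinv_1.
      apply Rinv_le_contravar; lra. nra. }
    lra. }
  assert (HsB : sqrt (INR p) <= B).
  { assert (0 <= B) by (pose proof (pos_INR N); lra).
    rewrite <- (sqrt_pow2 B) by lra. apply sqrt_le_1_alt. exact Hp2. }
  assert (HinvA : 1 / A <= 1 / (2 * L)).
  { unfold Rdiv. rewrite !Rmult_1_l. apply Rinv_le_contravar; lra. }
  assert (Hgap : sqrt (INR p) + 1 / (2 * L) <= sqrt (INR m)).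
  { assert (1 / L = 2 * (1 / (2 * L))) by (field; lra). lra. }
  assert (HpN : (N <= p)%nat).
  { apply INR_le. assert (INR N + 1 <= B ^ 2) by nra. lra. }
  assert (HmN : (N <= m)%nat).
  { apply INR_le. assert (INR N + 1 <= A ^ 2).
    { assert (B <= A) by (assert (0 < 1 / L) by (apply Rdiv_lt_0_compat; lra); lra).
      nra. } lra. }
  pose proof (HN p HpN) as Hup1. pose proof (HN m HmN) as Hum.
  unfold R_dist in Hup1, Hum.
  apply Rabs_def2 in Hup1. apply Rabs_def2 in Hum.
  set (ep := exp (sqrt (INR p))) in Hup1. set (em := exp (sqrt (INR m))) in Hum.
  assert (Hep : 0 < ep) by apply exp_pos.
  assert (Hem : em >= ep * a).
  { unfold em, ep, a. rewrite <- exp_plus.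
    destruct (Rle_lt_or_eq_dec _ _ Hgap) as [Hl|He].
    left. apply exp_increasing. exact Hl. right. rewrite He. reflexivity. }
  assert (HTp : INR (Tmax p x) < (1 + eps) * ep).
  { destruct Hup1 as [Hu _].
    assert (INR (Tmax p x) / ep < 1 + eps) by lra.
    apply Rmult_lt_reg_r with (/ ep). apply Rinv_0_lt_compat; lra.
    rewrite Rmult_assoc, Rinv_r by lra. lra. }
  assert (Hem0 : 0 < em) by apply exp_pos.
  assert (HTm : (1 - eps) * em < INR (Tmax m x)).
  { destruct Hum as [_ Hu].
    assert (1 - eps < INR (Tmax m x) / em) by lra.
    apply Rmult_lt_reg_r with (/ em). apply Rinv_0_lt_compat; lra.
    rewrite Rmult_assoc, Rinv_r by lra. lra. }
  assert (Hlt : (Tmax p x < Tmax m x)%nat).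
  { apply INR_lt.
    assert ((1 - eps) * em >= (1 - eps) * (ep * a)) by nra.
    assert ((1 - eps) * (ep * a) > (1 + eps) * ep) by nra.
    lra. }
  assert (Hpm : (p <= m)%nat).
  { destruct (le_lt_dec p m). exact l.
    pose proof (Tmax_mono x m p ltac:(lia)). lia. }
  destruct (Tmax_attain x p m Hpm) as [E|[j [Hj E]]].
  - lia.
  - exists j. split. exact Hj. exact E.
Qed.
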